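(* A convex hexagon is affine regular if and only if both of the following hold: - all six of its vertex triangles have the same area; - for one of the triangles whose vertices are vertices of the hexagon and which has exactly one side in common with the hexagon (for example the triangle $013$ in the hexagon $012345$), its area is twice the area of a vertex triangle.
   Context: An affine map of the plane is a bijection of the plane that maps collinear points to collinear points. A polygon is affine regular if it is the image of a regular polygon under an affine map, with vertices corresponding in order. For a hexagon with vertices $0,\dots,5$ in cyclic order, the vertex triangles are the triangles with vertices $i-1,i,i+1$ (indices mod $6$). *)

(* Defs.v *)
From Stdlib Require Import Reals Lra Arith.
Open Scope R_scope.

Definition point := (R * R)%type.

Definition sarea (a b c : point) : R :=
  ((fst b - fst a) * (snd c - snd a) - (fst c - fst a) * (snd b - snd a)) / 2.

Definition area (a b c : point) : R := Rabs (sarea a b c).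

Definition collinear (a b c : point) : Prop := sarea a b c = 0.

(* affine map as in the paper: a bijection of the plane mapping collinear
   points to collinear points *)
Definition affine_map (f : point -> point) : Prop :=
  (exists g : point -> point, (forall x, g (f x) = x) /\ (forall y, f (g y) = y)) /\
  (forall a b c, collinear a b c -> collinear (f a) (f b) (f c)).

(* A hexagon is given by P : nat -> point; its vertices are P 0, ..., P 5,
   and vertex indices are always taken modulo 6. *)
Definition V (P : nat -> point) (k : nat) : point := P (k mod 6).

(* convex (non-degenerate) hexagon with vertices 0..5 in cyclic order:
   for each side (i,i+1) all other vertices lie strictly on the same side,
   the side being the same for all sides (consistent orientation). *)
Definition convex_hexagon (P : nat -> point) : Prop :=
  exists s : R, (s = 1 \/ s = -1) /\
    forall i j : nat, (i < 6)%nat -> (j < 6)%nat ->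
      j <> i -> j <> ((i + 1) mod 6)%nat ->
      s * sarea (V P i) (V P (i + 1)) (V P j) > 0.

Definition regular_hexagon (Q : nat -> point) : Prop :=
  exists (cx cy r theta s : R), r > 0 /\ (s = 1 \/ s = -1) /\
    forall k : nat, (k < 6)%nat ->
      Q k = (cx + r * cos (theta + s * INR k * PI / 3),
             cy + r * sin (theta + s * INR k * PI / 3)).

Definition affine_regular (P : nat -> point) : Prop :=
  exists (f : point -> point) (Q : nat -> point),
    affine_map f /\ regular_hexagon Q /\
    forall k : nat, (k < 6)%nat -> P k = f (Q k).

(* area of the vertex triangle (i-1, i, i+1) *)
Definition vtri_area (P : nat -> point) (i : nat) : R :=
  area (V P (i + 5)) (V P i) (V P (i + 1)).

(* Main.v *)
Require Import Defs.
From Stdlib Require Import Reals Arith Lra Lia Psatz Classical.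
Open Scope R_scope.

Lemma col_param (p q r : point) : p <> q -> collinear p q r ->
  exists t, r = (fst p + t * (fst q - fst p), snd p + t * (snd q - snd p)).
Proof.
  destruct p as [px py], q as [qx qy], r as [rx ry]; unfold collinear, sarea; simpl.
  intros Hne H.
  destruct (Req_dec qx px) as [Ex|Ex].
  - subst qx. assert (Hy : qy - py <> 0).
    { intro Hy. apply Hne. f_equal; lra. }
    exists ((ry - py)/(qy - py)).
    assert (rx = px).
    { assert ((rx - px) * (qy - py) = 0) by lra.
      apply Rmult_integral in H0. destruct H0; lra. }
    subst rx. f_equal; field; auto.
  - assert (Hx : qx - px <> 0) by lra.
    exists ((rx - px)/(qx - px)).
    f_equal; [field; auto|].
    apply (Rmult_eq_reg_r (qx - px)); [|auto].
    field_simplify; [|auto]. lra.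
Qed.

Lemma col3 (p q r s t : point) : p <> q -> collinear p q r -> collinear p q s ->
  collinear p q t -> collinear r s t.
Proof.
  intros Hne Hr Hs Ht.
  destruct (col_param p q r Hne Hr) as [a Ha].
  destruct (col_param p q s Hne Hs) as [b Hb].
  destruct (col_param p q t Hne Ht) as [c Hc].
  subst. unfold collinear, sarea; simpl. field.
Qed.

Lemma col_triv1 (p q : point) : collinear p q p.
Proof. destruct p, q; unfold collinear, sarea; simpl; field. Qed.
Lemma col_triv2 (p q : point) : collinear p q q.
Proof. destruct p, q; unfold collinear, sarea; simpl; field. Qed.
Lemma col_triv0 (p q : point) : collinear p p q.
Proof. destruct p, q; unfold collinear, sarea; simpl; field. Qed.
Lemma col_cyc (p q r : point) : collinear p q r -> collinear q r p.
Proof. destruct p, q, r; unfold collinear, sarea; simpl; intros; lra. Qed.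
Lemma col_swap (p q r : point) : collinear p q r -> collinear q p r.
Proof. destruct p, q, r; unfold collinear, sarea; simpl; intros; lra. Qed.

Lemma aff_inj f : affine_map f -> forall x y, f x = f y -> x = y.
Proof.
  intros [[g [Hgf _]] _] x y H. rewrite <- (Hgf x), <- (Hgf y), H. reflexivity.
Qed.

Lemma aff_noncol f a b c : affine_map f -> ~ collinear a b c -> ~ collinear (f a) (f b) (f c).
Proof.
  intros Hf Hn Hc.
  pose proof (aff_inj f Hf) as Hinj.
  destruct Hf as [[g [Hgf Hfg]] Hcol].
  assert (Hab : a <> b). { intro; subst; apply Hn; apply col_triv0. }
  assert (Hac : a <> c). { intro; subst; apply Hn; apply col_triv1. }
  assert (Hbc : b <> c). { intro; subst; apply Hn. apply col_triv2. }
  assert (Hfab : f a <> f b) by (intro E; apply Hab; apply Hinj; auto).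
  set (Sx := fun x => collinear (f a) (f b) (f x)).
  assert (Sa : Sx a) by apply col_triv1.
  assert (Sb : Sx b) by apply col_triv2.
  assert (Sc : Sx c) by exact Hc.
  assert (Hcl : forall u v x, Sx u -> Sx v -> u <> v -> collinear u v x -> Sx x).
  { intros u v x Su Sv Huv Hx.
    assert (Hfuv : f u <> f v) by (intro E; apply Huv; apply Hinj; auto).
    assert (H1 : collinear (f u) (f v) (f a)) by (apply (col3 (f a) (f b)); auto; apply col_triv1).
    assert (H2 : collinear (f u) (f v) (f b)) by (apply (col3 (f a) (f b)); auto; apply col_triv2).
    apply (col3 (f u) (f v)); auto. }
  set (S := sarea a b c).
  assert (HS : S <> 0) by exact Hn.
  set (sx := fun x => (sarea a x c + sarea a b x) / S).
  assert (Claim1 : forall x, sx x <> 0 -> Sx x).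
  { intros x Hx.
    set (u := (fst a + sx x * (fst b - fst a), snd a + sx x * (snd b - snd a))).
    set (u' := (fst a + sx x * (fst c - fst a), snd a + sx x * (snd c - snd a))).
    assert (Su : Sx u).
    { apply (Hcl a b); auto. unfold u; destruct a, b; unfold collinear, sarea; simpl; field. }
    assert (Su' : Sx u').
    { apply (Hcl a c); auto. unfold u'; destruct a, c; unfold collinear, sarea; simpl; field. }
    apply (Hcl u u'); auto.
    - intro E. apply Hbc. unfold u, u' in E. destruct a as [ax ay], b as [bx by0], c as [cx cy].
      simpl in E. injection E; intros E2 E1.
      f_equal.
      + apply (Rmult_eq_reg_l (sx x)); [lra|auto].
      + apply (Rmult_eq_reg_l (sx x)); [lra|auto].
    - unfold u, u', sx, S in *. destruct a as [ax ay], b as [bx by0], c as [cx cy], x as [xx xy].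
      unfold collinear, sarea in *; simpl in *. field. intro Hz; apply HS; lra. }
  assert (Claim2 : forall x, Sx x).
  { intros x. destruct (Req_dec (sx x) 0) as [E|E]; [|apply Claim1; auto].
    set (y1 := (fst x + (fst b - fst a), snd x + (snd b - snd a))).
    set (y2 := (fst x + 2 * (fst b - fst a), snd x + 2 * (snd b - snd a))).
    assert (E1 : sx y1 = sx x + 1).
    { unfold sx, y1, S in *. destruct a as [ax ay], b as [bx by0], c as [cx cy], x as [xx xy].
      unfold sarea in *; simpl in *. field. intro Hz; apply HS; lra. }
    assert (E2 : sx y2 = sx x + 2).
    { unfold sx, y2, S in *. destruct a as [ax ay], b as [bx by0], c as [cx cy], x as [xx xy].
      unfold sarea in *; simpl in *. field. intro Hz; apply HS; lra. }
    apply (Hcl y1 y2).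
    - apply Claim1. lra.
    - apply Claim1. lra.
    - intro Ey. apply Hab. unfold y1, y2 in Ey. destruct a as [ax ay], b as [bx by0], x as [xx xy].
      simpl in Ey. injection Ey; intros. f_equal; lra.
    - unfold y1, y2. destruct a as [ax ay], b as [bx by0], x as [xx xy].
      unfold collinear, sarea; simpl; field. }
  set (fa := f a) in *. set (fb := f b) in *.
  set (y0 := (fst fa - (snd fb - snd fa), snd fa + (fst fb - fst fa))).
  pose proof (Claim2 (g y0)) as Hy. unfold Sx in Hy. rewrite Hfg in Hy.
  apply Hfab. unfold y0 in Hy. destruct fa as [ax ay], fb as [bx by0].
  unfold collinear, sarea in Hy; simpl in Hy.
  assert (Hq : ((bx - ax) * (bx - ax) + (by0 - ay) * (by0 - ay)) / 2 = 0).
  { rewrite <- Hy. field. }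
  assert (Hq2 : (bx - ax) * (bx - ax) + (by0 - ay) * (by0 - ay) = 0) by lra.
  destruct (Rplus_sqr_eq_0 (bx - ax) (by0 - ay) Hq2) as [H1 H2].
  f_equal; lra.
Qed.
Lemma aff_col_back f a b c : affine_map f -> collinear (f a) (f b) (f c) -> collinear a b c.
Proof.
  intros Hf H. apply NNPP. intro Hn. exact (aff_noncol f a b c Hf Hn H).
Qed.

Lemma aff_par f A B C D : affine_map f ->
  fst A + fst C = fst B + fst D -> snd A + snd C = snd B + snd D -> ~ collinear A B D ->
  (fst (f B) - fst (f A)) * (snd (f C) - snd (f D)) - (fst (f C) - fst (f D)) * (snd (f B) - snd (f A)) = 0.
Proof.
  intros Hf Ex Ey Hn.
  pose proof Hf as Hf'. destruct Hf' as [[g [Hgf Hfg]] Hcol].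
  apply NNPP. intro Hden.
  set (den := (fst (f B) - fst (f A)) * (snd (f C) - snd (f D)) - (fst (f C) - fst (f D)) * (snd (f B) - snd (f A))) in *.
  set (t := ((fst (f D) - fst (f A)) * (snd (f C) - snd (f D)) - (fst (f C) - fst (f D)) * (snd (f D) - snd (f A))) / den).
  set (z := (fst (f A) + t * (fst (f B) - fst (f A)), snd (f A) + t * (snd (f B) - snd (f A)))).
  assert (H1 : collinear (f A) (f B) (f (g z))).
  { rewrite Hfg. unfold z. destruct (f A), (f B). unfold collinear, sarea; simpl; field. }
  assert (H2 : collinear (f D) (f C) (f (g z))).
  { rewrite Hfg. unfold z, t, den in *. destruct (f A), (f B), (f C), (f D).
    unfold collinear, sarea; simpl in *; field. auto. }
  apply aff_col_back in H1; auto. apply aff_col_back in H2; auto.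
  apply Hn. destruct A as [ax ay], B as [bx by0], C as [cx cy], D as [dx dy], (g z) as [wx wy].
  unfold collinear, sarea in *; simpl in *.
  assert (cx = bx + dx - ax) by lra. assert (cy = by0 + dy - ay) by lra. subst cx cy.
  assert (Hid : ((dx - ax) * (wy - ay) - (wx - ax) * (dy - ay)) / 2 * 0 = 0) by lra.
  transitivity (((bx - ax) * (wy - ay) - (wx - ax) * (by0 - ay)) / 2 -
     ((bx + dx - ax - dx) * (wy - dy) - (wx - dx) * (by0 + dy - ay - dy)) / 2).
  - field.
  - rewrite H1, H2. lra.
Qed.

Lemma aff_pgram f A B C D : affine_map f ->
  fst A + fst C = fst B + fst D -> snd A + snd C = snd B + snd D -> ~ collinear A B D ->
  fst (f A) + fst (f C) = fst (f B) + fst (f D) /\ snd (f A) + snd (f C) = snd (f B) + snd (f D).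
Proof.
  intros Hf Ex Ey Hn.
  pose proof (aff_par f A B C D Hf Ex Ey Hn) as h1.
  assert (Hn' : ~ collinear A D B).
  { intro H; apply Hn. destruct A, B, D; unfold collinear, sarea in *; simpl in *; lra. }
  pose proof (aff_par f A D C B Hf ltac:(lra) ltac:(lra) Hn') as h2.
  pose proof (aff_noncol f A B D Hf Hn) as h3.
  destruct (f A) as [ax ay], (f B) as [bx by0], (f C) as [cx cy], (f D) as [dx dy].
  unfold collinear, sarea in h3; simpl in *.
  set (N := (bx - ax) * (dy - ay) - (dx - ax) * (by0 - ay)).
  assert (HN : N <> 0) by (intro E; apply h3; unfold N in E; lra).
  split.
  - apply (Rmult_eq_reg_r N); auto.
    assert (K : (ax + cx) * N - (bx + dx) * N =
      (dx - ax) * ((bx - ax) * (cy - dy) - (cx - dx) * (by0 - ay))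
      - (bx - ax) * ((dx - ax) * (cy - by0) - (cx - bx) * (dy - ay))) by (unfold N; ring).
    rewrite h1, h2 in K. lra.
  - apply (Rmult_eq_reg_r N); auto.
    assert (K : (ay + cy) * N - (by0 + dy) * N =
      (dy - ay) * ((bx - ax) * (cy - dy) - (cx - dx) * (by0 - ay))
      - (by0 - ay) * ((dx - ax) * (cy - by0) - (cx - bx) * (dy - ay))) by (unfold N; ring).
    rewrite h1, h2 in K. lra.
Qed.
Lemma trig_rec (p d : R) : cos d = 1/2 ->
  cos p + cos (p + 2 * d) = cos (p + d) /\ sin p + sin (p + 2 * d) = sin (p + d).
Proof.
  intros Hc.
  assert (Hs : sin d * sin d = 3/4).
  { pose proof (sin2_cos2 d) as H. unfold Rsqr in H. rewrite Hc in H. lra. }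
  replace (p + 2 * d) with ((p + d) + d) by ring.
  rewrite !cos_plus, !sin_plus, !cos_plus, Hc. split.
  - assert (E : cos p + ((cos p * (1/2) - sin p * sin d) * (1/2) - (sin p * (1/2) + cos p * sin d) * sin d)
                - (cos p * (1/2) - sin p * sin d) = cos p * (3/4 - sin d * sin d)) by field.
    apply Rminus_diag_uniq; rewrite E, Hs; ring.
  - assert (E : sin p + ((sin p * (1/2) + cos p * sin d) * (1/2) + (cos p * (1/2) - sin p * sin d) * sin d)
                - (sin p * (1/2) + cos p * sin d) = sin p * (3/4 - sin d * sin d)) by field.
    apply Rminus_diag_uniq; rewrite E, Hs; ring.
Qed.

Lemma trig_area (p d : R) : cos p * sin (p + d) - sin p * cos (p + d) = sin d.
Proof.
  rewrite sin_plus, cos_plus.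
  pose proof (sin2_cos2 p) as H. unfold Rsqr in H.
  assert (E : cos p * (sin p * cos d + cos p * sin d) - sin p * (cos p * cos d - sin p * sin d)
     = sin d * (sin p * sin p + cos p * cos p)) by ring.
  rewrite H in E. lra.
Qed.

Lemma sd_facts (s : R) : (s = 1 \/ s = -1) -> cos (s * PI / 3) = 1/2 /\ sin (s * PI / 3) <> 0.
Proof.
  intros Hs.
  assert (HP : 0 < sin (PI / 3)).
  { apply sin_gt_0; pose proof PI_RGT_0; lra. }
  destruct Hs; subst.
  - replace (1 * PI / 3) with (PI / 3) by field. split; [apply cos_PI3| lra].
  - replace (-1 * PI / 3) with (- (PI / 3)) by field. rewrite cos_neg, sin_neg.
    split; [apply cos_PI3| lra].
Qed.

Lemma reg_facts (Q : nat -> point) cx cy r th s :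
  r > 0 -> (s = 1 \/ s = -1) ->
  (forall k, (k < 6)%nat -> Q k = (cx + r * cos (th + s * INR k * PI / 3), cy + r * sin (th + s * INR k * PI / 3))) ->
  forall k, (k <= 3)%nat ->
  fst (Q k) + fst (Q (k+2)%nat) = fst (Q (k+1)%nat) + cx /\
  snd (Q k) + snd (Q (k+2)%nat) = snd (Q (k+1)%nat) + cy /\
  ~ collinear (Q k) (Q (k+1)%nat) (cx, cy).
Proof.
  intros Hr Hs HQ k Hk.
  destruct (sd_facts s Hs) as [Hc Hsn].
  rewrite !HQ by lia.
  set (p := th + s * INR k * PI / 3).
  set (d := s * PI / 3) in *.
  replace (th + s * INR (k + 1) * PI / 3) with (p + d) by (unfold p, d; rewrite plus_INR; simpl; field).
  replace (th + s * INR (k + 2) * PI / 3) with (p + 2 * d) by (unfold p, d; rewrite plus_INR; simpl; field).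
  destruct (trig_rec p d Hc) as [E1 E2].
  simpl. split; [|split].
  - rewrite <- E1. ring.
  - rewrite <- E2. ring.
  - unfold collinear, sarea; simpl. intro H.
    assert (E : ((cx + r * cos (p + d) - (cx + r * cos p)) * (cy - (cy + r * sin p)) -
       (cx - (cx + r * cos p)) * (cy + r * sin (p + d) - (cy + r * sin p))) / 2
       = r * r * (cos p * sin (p + d) - sin p * cos (p + d)) / 2) by field.
    rewrite trig_area in E. rewrite E in H.
    assert (r * r * sin d = 0) by lra.
    apply Rmult_integral in H0. destruct H0 as [H0|H0]; [|auto].
    apply Rmult_integral in H0. lra.
Qed.
Lemma pair_eta (p : point) : p = (fst p, snd p).
Proof. destruct p; reflexivity. Qed.

Lemma two_abs (x : R) : 2 * Rabs x = Rabs (2 * x).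
Proof. rewrite Rabs_mult, (Rabs_right 2) by lra. reflexivity. Qed.

Ltac solve_abs := first [ f_equal; field | rewrite <- Rabs_Ropp; f_equal; field ].

Lemma hex_rec_areas (P : nat -> point) (o : point) :
  (forall k, (k <= 3)%nat -> fst (P k) + fst (P (k+2)%nat) = fst (P (k+1)%nat) + fst o /\
                            snd (P k) + snd (P (k+2)%nat) = snd (P (k+1)%nat) + snd o) ->
  (forall i j, (i<6)%nat -> (j<6)%nat -> vtri_area P i = vtri_area P j) /\
  (exists i d : nat, (i < 6)%nat /\ (d = 3 \/ d = 4)%nat /\
      area (V P i) (V P (i + 1)) (V P (i + d)) = 2 * vtri_area P i).
Proof.
  intros HR.
  destruct (HR 0%nat ltac:(lia)) as [A0 B0].
  destruct (HR 1%nat ltac:(lia)) as [A1 B1].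
  destruct (HR 2%nat ltac:(lia)) as [A2 B2].
  destruct (HR 3%nat ltac:(lia)) as [A3 B3].
  simpl in A0, B0, A1, B1, A2, B2, A3, B3.
  assert (H2 : P 2%nat = (fst (P 1%nat) + fst o - fst (P 0%nat), snd (P 1%nat) + snd o - snd (P 0%nat))).
  { rewrite (pair_eta (P 2%nat)). f_equal; lra. }
  assert (H3 : P 3%nat = (2 * fst o - fst (P 0%nat), 2 * snd o - snd (P 0%nat))).
  { rewrite (pair_eta (P 3%nat)). f_equal; lra. }
  assert (H4 : P 4%nat = (2 * fst o - fst (P 1%nat), 2 * snd o - snd (P 1%nat))).
  { rewrite (pair_eta (P 4%nat)). f_equal; lra. }
  assert (H5 : P 5%nat = (fst o + fst (P 0%nat) - fst (P 1%nat), snd o + snd (P 0%nat) - snd (P 1%nat))).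
  { rewrite (pair_eta (P 5%nat)). f_equal; lra. }
  clear HR A0 B0 A1 B1 A2 B2 A3 B3.
  set (T := sarea (P 5%nat) (P 0%nat) (P 1%nat)).
  assert (HT : forall i, (i < 6)%nat -> vtri_area P i = Rabs T).
  { intros i Hi. unfold vtri_area, area, V, T.
    destruct i as [|[|[|[|[|[|i]]]]]]; [ | | | | | | lia]; simpl Nat.add; simpl Nat.modulo;
      rewrite ?H2, ?H3, ?H4, ?H5; destruct (P 0%nat) as [x0 y0], (P 1%nat) as [x1 y1], o as [ox oy];
      unfold sarea; simpl; solve_abs. }
  split.
  - intros i j Hi Hj. rewrite (HT i Hi), (HT j Hj). reflexivity.
  - exists 0%nat, 3%nat. split; [lia|]. split; [lia|].
    rewrite (HT 0%nat ltac:(lia)). unfold area, V, T. simpl Nat.add; simpl Nat.modulo.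
    rewrite H3, H5. destruct (P 0%nat) as [x0 y0], (P 1%nat) as [x1 y1], o as [ox oy].
    unfold sarea; simpl.
    rewrite two_abs. solve_abs.
Qed.

Lemma forward (P : nat -> point) : affine_regular P ->
  (forall i j, (i<6)%nat -> (j<6)%nat -> vtri_area P i = vtri_area P j) /\
  (exists i d : nat, (i < 6)%nat /\ (d = 3 \/ d = 4)%nat /\
      area (V P i) (V P (i + 1)) (V P (i + d)) = 2 * vtri_area P i).
Proof.
  intros [f [Q [Hf [[cx [cy [r [th [s [Hr [Hs HQ]]]]]]] HPQ]]]].
  apply (hex_rec_areas P (f (cx, cy))).
  intros k Hk. destruct (reg_facts Q cx cy r th s Hr Hs HQ k Hk) as [E1 [E2 N]].
  rewrite !HPQ by lia. apply aff_pgram; auto.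
Qed.
Ltac solve_disj H := first [ exact H | left; exact H | right; solve_disj H ].

Lemma norm_hex (N : nat -> point) :
  N 0%nat = (0,0) -> N 1%nat = (1,0) -> N 2%nat = (1,1) ->
  (forall k, (k < 6)%nat -> sarea (V N (k + 5)) (V N k) (V N (k + 1)) = 1/2) ->
  sarea (N 0%nat) (N 1%nat) (N 3%nat) > 0 -> sarea (N 0%nat) (N 1%nat) (N 4%nat) > 0 ->
  (exists i d : nat, (i < 6)%nat /\ (d = 3 \/ d = 4)%nat /\
      sarea (V N i) (V N (i + 1)) (V N (i + d)) = 1) ->
  N 3%nat = (0,2) /\ N 4%nat = (-1,2) /\ N 5%nat = (-1,1).
Proof.
  intros H0 H1 H2 Hv P3 P4 [i [d [Hi [Hd Ht]]]].
  assert (Ht' : sarea (N 0%nat) (N 1%nat) (N 3%nat) = 1 \/ sarea (N 0%nat) (N 1%nat) (N 4%nat) = 1 \/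
                sarea (N 1%nat) (N 2%nat) (N 4%nat) = 1 \/ sarea (N 1%nat) (N 2%nat) (N 5%nat) = 1 \/
                sarea (N 2%nat) (N 3%nat) (N 5%nat) = 1 \/ sarea (N 2%nat) (N 3%nat) (N 0%nat) = 1 \/
                sarea (N 3%nat) (N 4%nat) (N 0%nat) = 1 \/ sarea (N 3%nat) (N 4%nat) (N 1%nat) = 1 \/
                sarea (N 4%nat) (N 5%nat) (N 1%nat) = 1 \/ sarea (N 4%nat) (N 5%nat) (N 2%nat) = 1 \/
                sarea (N 5%nat) (N 0%nat) (N 2%nat) = 1 \/ sarea (N 5%nat) (N 0%nat) (N 3%nat) = 1).
  { unfold V in Ht. destruct i as [|[|[|[|[|[|i]]]]]]; [ | | | | | | lia];
    destruct Hd; subst d; simpl Nat.add in Ht; simpl Nat.modulo in Ht; solve_disj Ht. }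
  clear Ht Hi Hd i d.
  pose proof (Hv 0%nat ltac:(lia)) as V0.
  pose proof (Hv 2%nat ltac:(lia)) as V2.
  pose proof (Hv 3%nat ltac:(lia)) as V3.
  pose proof (Hv 4%nat ltac:(lia)) as V4.
  pose proof (Hv 5%nat ltac:(lia)) as V5.
  clear Hv. unfold V in *. simpl Nat.add in *. simpl Nat.modulo in V0, V2, V3, V4, V5.
  rewrite H0, H1, H2 in *.
  revert V0 V2 V3 V4 V5 P3 P4 Ht'.
  destruct (N 3%nat) as [x3 y3], (N 4%nat) as [x4 y4], (N 5%nat) as [x5 y5].
  intros V0 V2 V3 V4 V5 P3 P4 Ht'.
  unfold sarea in V0, V2, V3, V4, V5, P3, P4, Ht'; simpl in V0, V2, V3, V4, V5, P3, P4, Ht'.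
  assert (Ey5 : y5 = 1) by nra.
  assert (Ex3 : x3 = 0) by nra.
  subst y5 x3.
  assert (Hy3 : y3 > 0) by lra.
  assert (Hy4 : y4 > 0) by lra.
  assert (K1 : y3 * (x5 - x4) = 0) by lra.
  assert (Ex5 : x5 = x4).
  { apply Rmult_integral in K1. destruct K1; lra. }
  subst x5.
  assert (K2 : x4 * (1 - y4) = 1) by lra.
  assert (K3 : y4 = - (y3 - 1) * (x4 - 1)) by lra.
  assert (Hx1 : x4 <> 1).
  { intro E; subst x4. lra. }
  assert (Hx0 : x4 <> 0).
  { intro E; subst x4. lra. }
  assert (K4 : (x4 - 1) * (1 + (y3 - 1) * x4) = 0).
  { rewrite K3 in K2. lra. }
  assert (K5 : x4 * y3 = x4 - 1).
  { apply Rmult_integral in K4. destruct K4 as [K4|K4]; [lra|]. lra. }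
  assert (Ey4 : y4 = y3).
  { apply (Rmult_eq_reg_l x4); auto. lra. }
  subst y4.
  assert (Fin : x4 = -1 /\ y3 = 2).
  { repeat destruct Ht' as [Ht'|Ht']; split; nra. }
  destruct Fin as [F1 F2]. subst. split; [|split]; f_equal; lra.
Qed.
Definition Lm (p0 p1 p2 x : point) : point :=
  let ax := fst p1 - fst p0 in let ay := snd p1 - snd p0 in
  let bx := fst p2 - fst p1 in let by0 := snd p2 - snd p1 in
  let D := ax * by0 - bx * ay in
  (((fst x - fst p0) * by0 - bx * (snd x - snd p0)) / D, (ax * (snd x - snd p0) - (fst x - fst p0) * ay) / D).

Lemma Lm_D (p0 p1 p2 : point) : (fst p1 - fst p0) * (snd p2 - snd p1) - (fst p2 - fst p1) * (snd p1 - snd p0)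
  = 2 * sarea p0 p1 p2.
Proof. destruct p0, p1, p2; unfold sarea; simpl; field. Qed.

Lemma Lm_sarea (p0 p1 p2 x y z : point) : sarea p0 p1 p2 <> 0 ->
  sarea (Lm p0 p1 p2 x) (Lm p0 p1 p2 y) (Lm p0 p1 p2 z) = sarea x y z / (2 * sarea p0 p1 p2).
Proof.
  intros H. rewrite <- Lm_D. rewrite <- Lm_D in H |- * || idtac.
  assert (HD : (fst p1 - fst p0) * (snd p2 - snd p1) - (fst p2 - fst p1) * (snd p1 - snd p0) <> 0).
  { rewrite Lm_D. lra. }
  unfold Lm. destruct p0, p1, p2, x, y, z; unfold sarea; simpl in *. field. auto.
Qed.

Lemma Lm_012 (p0 p1 p2 : point) : sarea p0 p1 p2 <> 0 ->
  Lm p0 p1 p2 p0 = (0,0) /\ Lm p0 p1 p2 p1 = (1,0) /\ Lm p0 p1 p2 p2 = (1,1).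
Proof.
  intros H.
  assert (HD : (fst p1 - fst p0) * (snd p2 - snd p1) - (fst p2 - fst p1) * (snd p1 - snd p0) <> 0).
  { rewrite Lm_D. lra. }
  unfold Lm. destruct p0, p1, p2; simpl in *. split; [|split]; f_equal; field; auto.
Qed.

Lemma Lm_inv (p0 p1 p2 x : point) : sarea p0 p1 p2 <> 0 ->
  x = (fst p0 + fst (Lm p0 p1 p2 x) * (fst p1 - fst p0) + snd (Lm p0 p1 p2 x) * (fst p2 - fst p1),
       snd p0 + fst (Lm p0 p1 p2 x) * (snd p1 - snd p0) + snd (Lm p0 p1 p2 x) * (snd p2 - snd p1)).
Proof.
  intros H.
  assert (HD : (fst p1 - fst p0) * (snd p2 - snd p1) - (fst p2 - fst p1) * (snd p1 - snd p0) <> 0).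
  { rewrite Lm_D. lra. }
  unfold Lm. destruct p0, p1, p2, x; simpl in *. f_equal; field; auto.
Qed.
Definition afff (ox oy m1x m1y m2x m2y : R) (x : point) : point :=
  (ox + fst x * m1x + snd x * m2x, oy + fst x * m1y + snd x * m2y).

Lemma afff_affine ox oy m1x m1y m2x m2y : m1x * m2y - m2x * m1y <> 0 ->
  affine_map (afff ox oy m1x m1y m2x m2y).
Proof.
  intros HD. split.
  - exists (fun y => (((fst y - ox) * m2y - m2x * (snd y - oy)) / (m1x * m2y - m2x * m1y),
                      (m1x * (snd y - oy) - (fst y - ox) * m1y) / (m1x * m2y - m2x * m1y))).
    split; intros [a b]; unfold afff; simpl; f_equal; field; auto.
  - intros [a1 a2] [b1 b2] [c1 c2]. unfold collinear, afff, sarea; simpl. intros H.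
    transitivity ((m1x * m2y - m2x * m1y) * (((b1 - a1) * (c2 - a2) - (c1 - a1) * (b2 - a2)) / 2)).
    + field.
    + rewrite H. ring.
Qed.

Lemma afff_rec ox oy m1x m1y m2x m2y (A B C : point) :
  fst A + fst C = fst B + 0 -> snd A + snd C = snd B + 0 ->
  afff ox oy m1x m1y m2x m2y C =
  (fst (afff ox oy m1x m1y m2x m2y B) + ox - fst (afff ox oy m1x m1y m2x m2y A),
   snd (afff ox oy m1x m1y m2x m2y B) + oy - snd (afff ox oy m1x m1y m2x m2y A)).
Proof.
  intros E1 E2. destruct A as [a1 a2], B as [b1 b2], C as [c1 c2]; unfold afff; simpl in *.
  assert (c1 = b1 - a1) by lra. assert (c2 = b2 - a2) by lra. subst. f_equal; ring.
Qed.

Lemma abs_sign (s x : R) : (s = 1 \/ s = -1) -> s * x > 0 -> Rabs x = s * x.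
Proof.
  intros [E|E] H; subst.
  - rewrite Rabs_right; lra.
  - rewrite Rabs_left1; lra.
Qed.

Lemma sarea_cyc (a b c : point) : sarea a b c = sarea b c a.
Proof. destruct a, b, c; unfold sarea; simpl; field. Qed.

Lemma ratio_pos (s x T : R) : (s = 1 \/ s = -1) -> s * x > 0 -> s * T > 0 -> x / (2 * T) > 0.
Proof.
  intros [E|E] H1 H2; subst.
  - apply Rdiv_lt_0_compat; lra.
  - replace (x / (2 * T)) with ((- x) / (2 * (- T))) by (field; lra).
    apply Rdiv_lt_0_compat; lra.
Qed.
Lemma backward (P : nat -> point) : convex_hexagon P ->
  (forall i j : nat, (i < 6)%nat -> (j < 6)%nat -> vtri_area P i = vtri_area P j) ->
  (exists i d : nat, (i < 6)%nat /\ (d = 3 \/ d = 4)%nat /\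
       area (V P i) (V P (i + 1)) (V P (i + d)) = 2 * vtri_area P i) ->
  affine_regular P.
Proof.
  intros [s [Hs Hc]] Heq [i [d [Hi [Hd Ht]]]].
  assert (Hvs : forall k, (k < 6)%nat -> s * sarea (V P (k + 5)) (V P k) (V P (k + 1)) > 0).
  { intros k Hk. rewrite sarea_cyc.
    destruct k as [|[|[|[|[|[|k]]]]]]; [ | | | | | | lia];
    match goal with |- s * sarea (V P ?a) (V P ?b) (V P ?c) > 0 =>
      let j := eval compute in (c mod 6)%nat in
      exact (Hc a j ltac:(lia) ltac:(lia) ltac:(simpl; lia) ltac:(simpl; lia)) end. }
  set (T := sarea (P 0%nat) (P 1%nat) (P 2%nat)).
  assert (HT : s * T > 0) by exact (Hvs 1%nat ltac:(lia)).
  assert (HTne : T <> 0) by (intro E; rewrite E in HT; lra).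
  assert (Hsv : forall k, (k < 6)%nat -> sarea (V P (k + 5)) (V P k) (V P (k + 1)) = T).
  { intros k Hk. pose proof (Heq k 1%nat Hk ltac:(lia)) as H. unfold vtri_area, area in H.
    rewrite (abs_sign s _ Hs (Hvs k Hk)), (abs_sign s _ Hs (Hvs 1%nat ltac:(lia))) in H.
    apply (Rmult_eq_reg_l s); [exact H | lra]. }
  assert (Htri : sarea (V P i) (V P (i + 1)) (V P (i + d)) = 2 * T).
  { assert (Hts : s * sarea (V P i) (V P (i + 1)) (V P (i + d)) > 0).
    { destruct i as [|[|[|[|[|[|i]]]]]]; [ | | | | | | lia]; destruct Hd; subst d;
      match goal with |- s * sarea (V P ?a) (V P ?b) (V P ?c) > 0 =>
        let j := eval compute in (c mod 6)%nat in
        exact (Hc a j ltac:(lia) ltac:(lia) ltac:(simpl; lia) ltac:(simpl; lia)) end. }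
    unfold vtri_area, area in Ht.
    rewrite (abs_sign s _ Hs Hts), (abs_sign s _ Hs (Hvs i Hi)), (Hsv i Hi) in Ht.
    apply (Rmult_eq_reg_l s); [rewrite Ht; ring | lra]. }
  set (N := fun k => Lm (P 0%nat) (P 1%nat) (P 2%nat) (P k)).
  destruct (Lm_012 (P 0%nat) (P 1%nat) (P 2%nat) HTne) as [N0 [N1 N2]].
  destruct (norm_hex N N0 N1 N2) as [E3 [E4 E5]].
  - intros k Hk.
    change (sarea (Lm (P 0%nat) (P 1%nat) (P 2%nat) (V P (k + 5))) (Lm (P 0%nat) (P 1%nat) (P 2%nat) (V P k))
      (Lm (P 0%nat) (P 1%nat) (P 2%nat) (V P (k + 1))) = 1/2).
    rewrite (Lm_sarea _ _ _ _ _ _ HTne), (Hsv k Hk). fold T. field. auto.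
  - unfold N. rewrite (Lm_sarea _ _ _ _ _ _ HTne). apply (ratio_pos s); auto.
    exact (Hc 0%nat 3%nat ltac:(lia) ltac:(lia) ltac:(lia) ltac:(simpl; lia)).
  - unfold N. rewrite (Lm_sarea _ _ _ _ _ _ HTne). apply (ratio_pos s); auto.
    exact (Hc 0%nat 4%nat ltac:(lia) ltac:(lia) ltac:(lia) ltac:(simpl; lia)).
  - exists i, d. split; [auto|]. split; [auto|].
    change (sarea (Lm (P 0%nat) (P 1%nat) (P 2%nat) (V P i)) (Lm (P 0%nat) (P 1%nat) (P 2%nat) (V P (i + 1)))
      (Lm (P 0%nat) (P 1%nat) (P 2%nat) (V P (i + d))) = 1).
    rewrite (Lm_sarea _ _ _ _ _ _ HTne), Htri. fold T. field. auto.
  - pose proof (Lm_inv (P 0%nat) (P 1%nat) (P 2%nat) (P 3%nat) HTne) as I3.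
    pose proof (Lm_inv (P 0%nat) (P 1%nat) (P 2%nat) (P 4%nat) HTne) as I4.
    pose proof (Lm_inv (P 0%nat) (P 1%nat) (P 2%nat) (P 5%nat) HTne) as I5.
    change (Lm (P 0%nat) (P 1%nat) (P 2%nat) (P 3%nat)) with (N 3%nat) in I3.
    change (Lm (P 0%nat) (P 1%nat) (P 2%nat) (P 4%nat)) with (N 4%nat) in I4.
    change (Lm (P 0%nat) (P 1%nat) (P 2%nat) (P 5%nat)) with (N 5%nat) in I5.
    rewrite E3 in I3. rewrite E4 in I4. rewrite E5 in I5. simpl in I3, I4, I5.
    clear E3 E4 E5 N0 N1 N2.
    set (sg := sin (PI / 3)).
    assert (Hsg : sg > 0) by (apply sin_gt_0; pose proof PI_RGT_0; lra).
    set (Q := fun k : nat => (0 + 1 * cos (0 + 1 * INR k * PI / 3), 0 + 1 * sin (0 + 1 * INR k * PI / 3))).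
    assert (HQ : forall k, (k < 6)%nat -> Q k = (0 + 1 * cos (0 + 1 * INR k * PI / 3), 0 + 1 * sin (0 + 1 * INR k * PI / 3))) by reflexivity.
    assert (Q0 : Q 0%nat = (1, 0)).
    { unfold Q. replace (0 + 1 * INR 0 * PI / 3) with 0 by (simpl; field). rewrite cos_0, sin_0. f_equal; ring. }
    assert (Q1 : Q 1%nat = (1/2, sg)).
    { unfold Q, sg. replace (0 + 1 * INR 1 * PI / 3) with (PI / 3) by (simpl; field). rewrite cos_PI3. f_equal; ring. }
    pose proof (reg_facts Q 0 0 1 0 1 ltac:(lra) ltac:(lra) HQ) as RF.
    destruct (P 0%nat) as [x0 y0] eqn:EP0, (P 1%nat) as [x1 y1] eqn:EP1, (P 2%nat) as [x2 y2] eqn:EP2.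
    simpl in I3, I4, I5.
    set (ox := x0 + x2 - x1). set (oy := y0 + y2 - y1).
    set (m1x := x0 - ox). set (m1y := y0 - oy).
    set (m2x := (x1 - ox - m1x / 2) / sg). set (m2y := (y1 - oy - m1y / 2) / sg).
    set (f := afff ox oy m1x m1y m2x m2y).
    assert (HD : m1x * m2y - m2x * m1y <> 0).
    { intro E. apply HTne. unfold T. rewrite ?EP0, ?EP1, ?EP2.
      unfold m2x, m2y, m1x, m1y, ox, oy in E. unfold sarea; simpl.
      assert (E' : (x1 - x0) * (y2 - y0) - (x2 - x0) * (y1 - y0) = sg * ((x0 - (x0 + x2 - x1)) * ((y1 - (y0 + y2 - y1) - (y0 - (y0 + y2 - y1)) / 2) / sg) -
      (x1 - (x0 + x2 - x1) - (x0 - (x0 + x2 - x1)) / 2) / sg * (y0 - (y0 + y2 - y1)))) by (field; lra).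
      rewrite E in E'. lra. }
    exists f, Q. split; [apply afff_affine; auto|]. split.
    { exists 0, 0, 1, 0, 1. split; [lra|]. split; [left; reflexivity|]. exact HQ. }
    assert (F0 : f (Q 0%nat) = (x0, y0)).
    { rewrite Q0. unfold f, afff, m1x, m1y; simpl. f_equal; ring. }
    assert (F1 : f (Q 1%nat) = (x1, y1)).
    { rewrite Q1. unfold f, afff, m2x, m2y, m1x, m1y; simpl. f_equal; field; lra. }
    assert (FR : forall k, (k <= 3)%nat -> f (Q (k + 2)%nat) =
        (fst (f (Q (k + 1)%nat)) + ox - fst (f (Q k)), snd (f (Q (k + 1)%nat)) + oy - snd (f (Q k)))).
    { intros k Hk. destruct (RF k Hk) as [R1 [R2 _]]. unfold f. apply afff_rec; auto. }
    assert (F2 : f (Q 2%nat) = (x2, y2)).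
    { pose proof (FR 0%nat ltac:(lia)) as G; simpl Nat.add in G; rewrite G. rewrite F0, F1. simpl. unfold ox, oy. f_equal; ring. }
    assert (F3 : f (Q 3%nat) = P 3%nat).
    { pose proof (FR 1%nat ltac:(lia)) as G; simpl Nat.add in G; rewrite G. rewrite F1, F2, I3. simpl. unfold ox, oy. f_equal; ring. }
    assert (F4 : f (Q 4%nat) = P 4%nat).
    { pose proof (FR 2%nat ltac:(lia)) as G; simpl Nat.add in G; rewrite G. rewrite F2, F3, I3, I4. simpl. unfold ox, oy. f_equal; ring. }
    assert (F5 : f (Q 5%nat) = P 5%nat).
    { pose proof (FR 3%nat ltac:(lia)) as G; simpl Nat.add in G; rewrite G. rewrite F3, F4, I3, I4, I5. simpl. unfold ox, oy. f_equal; ring. }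
    intros k Hk. destruct k as [|[|[|[|[|[|k]]]]]]; [ | | | | | | lia].
    + rewrite F0; auto.
    + rewrite F1; auto.
    + rewrite F2; auto.
    + rewrite F3; auto.
    + rewrite F4; auto.
    + rewrite F5; auto.
Qed.

Theorem proposition3 (P : nat -> point) :
  convex_hexagon P ->
  (affine_regular P <->
   ((forall i j : nat, (i < 6)%nat -> (j < 6)%nat -> vtri_area P i = vtri_area P j) /\
    (exists i d : nat, (i < 6)%nat /\ (d = 3 \/ d = 4)%nat /\
       area (V P i) (V P (i + 1)) (V P (i + d)) = 2 * vtri_area P i))).
Proof.
  intros Hc. split.
  - apply forward.
  - intros [H1 H2]. apply backward; auto.
Qed.
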